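(* Let $K=K(n)=o\left(\frac{\log n}{\log\log n}\right)$. For all sufficiently large $n$ there exists an $n$-vertex graph $G(V,E)$ with maximum degree $\Delta$ such that if for each $v\in V$ a set $L(v)$ of $K$ colors is chosen independently and uniformly at random from $[\Delta+1]$, then with probability $1-o(1)$ there is no proper coloring $\mathcal{C}:V\to[\Delta+1]$ of $G$ with $\mathcal{C}(v)\in L(v)$ for all $v\in V$.
   Context: $[t]=\{1,\ldots,t\}$; a proper coloring has no monochromatic edge. *)

(* Defs.v *)
From mathcomp Require Import all_boot.
From Stdlib Require Import Reals.
Set Implicit Arguments. Unset Strict Implicit. Unset Printing Implicit Defensive.

(* A simple graph on vertex set 'I_n is a symmetric irreflexive e : rel 'I_n. *)
Definition maxdeg n (e : rel 'I_n) : nat := \max_(v : 'I_n) #|[set u | e v u]|.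

(* the sample space: list assignments L(v), each a K-subset of the D colors *)
Definition lists n D k : {set {ffun 'I_n -> {set 'I_D}}} :=
  [set L : {ffun 'I_n -> {set 'I_D}} | [forall v, #|L v| == k]].

Definition listcolorable n (e : rel 'I_n) D (L : {ffun 'I_n -> {set 'I_D}}) : bool :=
  [exists c : {ffun 'I_n -> 'I_D},
     [forall v, c v \in L v] && [forall u, forall v, e u v ==> (c u != c v)]].

Definition good_lists n (e : rel 'I_n) k : {set {ffun 'I_n -> {set 'I_(maxdeg e).+1}}} :=
  [set L in lists n (maxdeg e).+1 k | listcolorable e L].

(* Main.v *)
Require Import Defs.
From mathcomp Require Import all_boot.
From Stdlib Require Import Reals Lra.
From mathcomp Require Import all_boot zify ring.
Set Implicit Arguments. Unset Strict Implicit. Unset Printing Implicit Defensive.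

Section Count.
Variables (X : finType) (S Z : {set X}) (m : nat).
Hypothesis m_gt0 : 0 < m.

Definition goodB N (f : {ffun 'I_N -> X}) : bool :=
  [forall v, f v \in S] &&
  [forall b : 'I_(N %/ m), exists v : 'I_N, (v %/ m == b) && (f v \notin Z)].

Definition cnt N := #|[set f : {ffun 'I_N -> X} | goodB f]|.

Definition leftA (g : {ffun 'I_m -> X}) : bool :=
  [forall v, g v \in S] && [exists v, g v \notin Z].

Lemma cnt_split N : cnt (m + N) <= #|[set g | leftA g]| * cnt N.
Proof.
rewrite /cnt -cardsX.
pose sp (f : {ffun 'I_(m + N) -> X}) :=
  ([ffun i => f (lshift N i)], [ffun i => f (rshift m i)]).
have inj_sp : injective sp.
  move=> f g [] /ffunP E1 /ffunP E2; apply/ffunP => v.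
  rewrite -(splitK v); case: (split v) => [i|j] /=.
    by have := E1 i; rewrite !ffunE => ->.
  by have := E2 j; rewrite !ffunE => ->.
rewrite -(card_imset _ inj_sp); apply: subset_leq_card.
apply/subsetP => p /imsetP [f]; rewrite inE => /andP [/forallP fS /forallP fB] ->.
rewrite inE /= !inE; apply/andP; split.
  apply/andP; split; first by apply/forallP => i; rewrite ffunE.
  have b0 : 0 < (m + N) %/ m by rewrite divnDl // divnn m_gt0.
  have [v /andP [/eqP vb vZ]] := existsP (fB (Ordinal b0)).
  move: vb vZ; rewrite -(splitK v); case: (split v) => [i|j] /=.
    by move=> _ iZ; apply/existsP; exists i; rewrite ffunE.
  by rewrite divnDl // divnn m_gt0.
apply/andP; split; first by apply/forallP => i; rewrite ffunE.
apply/forallP => b.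
have b1 : b.+1 < (m + N) %/ m by rewrite divnDl // divnn m_gt0 add1n ltnS.
have [v /andP [/eqP vb vZ]] := existsP (fB (Ordinal b1)).
move: vb vZ; rewrite -(splitK v); case: (split v) => [i|j] /=.
  by rewrite divn_small.
rewrite divnDl // divnn m_gt0 add1n => -[jb] jZ.
by apply/existsP; exists j; rewrite ffunE jb eqxx.
Qed.


Lemma cnt_le N : cnt N <= #|S| ^ N.
Proof.
have -> : #|S| ^ N = #|ffun_on_mem 'I_N (mem S)| by rewrite card_ffun_on card_ord.
rewrite /cnt -cardsE; apply: subset_leq_card.
apply/subsetP => f; rewrite !inE /goodB => /andP [/forallP fS _].
by apply/ffun_onP => v; apply: fS.
Qed.

Lemma left_le : Z \subset S -> #|[set g | leftA g]| + #|Z| ^ m <= #|S| ^ m.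
Proof.
move=> ZS.
have -> : #|S| ^ m = #|ffun_on_mem 'I_m (mem S)| by rewrite card_ffun_on card_ord.
have -> : #|Z| ^ m = #|ffun_on_mem 'I_m (mem Z)| by rewrite card_ffun_on card_ord.
rewrite -(cardsE (ffun_on_mem 'I_m (mem S))) -(cardsE (ffun_on_mem 'I_m (mem Z))) -cardsUI.
have -> : [set g | leftA g] :&: [set x in ffun_on (mem Z)] = set0.
  apply/setP => g; rewrite !inE; apply/negP => /andP [/andP [_ /existsP [v vZ]] /ffun_onP gZ].
  by move: vZ; rewrite gZ.
rewrite cards0 addn0; apply: subset_leq_card; apply/subsetP => g.
rewrite !inE => /orP [/andP [/forallP gS _] | /ffun_onP gZ]; apply/ffun_onP => v //.
by apply: (subsetP ZS).
Qed.

Variable M : nat.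
Hypothesis hb : #|[set g | leftA g]| * M <= M.-1 * #|S| ^ m.

Lemma cnt_bound N : cnt N * M ^ (N %/ m) <= M.-1 ^ (N %/ m) * #|S| ^ N.
Proof.
elim: N {-2}N (leqnn N) => [|k IH] N.
  by rewrite leqn0 => /eqP ->; rewrite div0n !expn0 mul1n muln1 cnt_le.
move=> hN; case: (ltnP N m) => hNm.
  by rewrite divn_small // !expn0 mul1n muln1 cnt_le.
have -> : N = m + (N - m) by rewrite subnKC.
rewrite divnDl // divnn m_gt0 add1n !expnS.
have := cnt_split (N - m); have := IH (N - m) ltac:(lia).
set c1 := cnt _; set c0 := cnt _; set q := (_ %/ m); set L := #|[set g | leftA g]|.
move=> h1 h2.
rewrite expnD.
apply: (leq_trans (leq_mul h2 (leqnn (M * M ^ q)))).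
have -> : L * c1 * (M * M ^ q) = (L * M) * (c1 * M ^ q) by ring.
apply: (leq_trans (leq_mul hb h1)).
have -> : M.-1 * #|S| ^ m * (M.-1 ^ q * #|S| ^ (N - m)) =
   M.-1 * M.-1 ^ q * (#|S| ^ m * #|S| ^ (N - m)) by ring.
by [].
Qed.
End Count.

Definition Gr (m n : nat) : rel 'I_n :=
  fun u v => [&& u != v, u %/ m == v %/ m & u %/ m < n %/ m].

Arguments Gr : clear implicits.

Lemma Gr_irr m n : irreflexive (Gr m n).
Proof. by move=> u; rewrite /Gr eqxx. Qed.

Lemma Gr_sym m n : symmetric (Gr m n).
Proof.
move=> u v; rewrite /Gr [v == u]eq_sym.
case E: (u %/ m == v %/ m).
  by move/eqP: E => ->; rewrite eqxx.
by rewrite [v %/ m == _]eq_sym E /= !andbF.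
Qed.

Lemma deg_le m n (m_gt0 : 0 < m) (v : 'I_n) : #|[set u | Gr m n v u]| <= m.-1.
Proof.
pose f (u : 'I_n) : 'I_m := Ordinal (ltn_pmod u m_gt0).
have finj : {in [set u | Gr m n v u] &, injective f}.
  move=> u w; rewrite !inE /Gr => /and3P [_ /eqP hu _] /and3P [_ /eqP hw _] /(congr1 val) /= E.
  apply: val_inj => /=; rewrite (divn_eq u m) (divn_eq w m) -hu -hw E //.
rewrite -(card_in_imset finj).
have -> : m.-1 = #|[set~ f v]| by rewrite cardsC1 card_ord.
apply: subset_leq_card; apply/subsetP => i /imsetP [u]; rewrite !inE /Gr => /and3P [uv /eqP hu _] ->.
apply/negP => /eqP /(congr1 val) /= E; move: uv; apply/negP; rewrite negbK.
by apply/eqP/val_inj => /=; rewrite (divn_eq u m) (divn_eq v m) hu E.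
Qed.

Lemma deg0 m n (m_gt0 : 0 < m) (hmn : m <= n) :
  m.-1 <= #|[set u | Gr m n (Ordinal (leq_trans m_gt0 hmn)) u]|.
Proof.
pose f (i : 'I_m) : 'I_n := widen_ord hmn i.
have finj : injective f by move=> i j /(congr1 val) /= E; apply: val_inj.
have -> : m.-1 = #|[set~ (Ordinal m_gt0)]| by rewrite cardsC1 card_ord.
rewrite -(card_imset _ finj).
apply: subset_leq_card; apply/subsetP => u /imsetP [i]; rewrite !inE => hi ->.
rewrite /Gr /= div0n divn_small //; apply/and3P; split => //.
  by apply/negP => /eqP /(congr1 val) /= E; move: hi; apply/negP; rewrite negbK; apply/eqP/val_inj.
by rewrite divn_gt0.
Qed.

Lemma maxdeg_Gr m n (m_gt0 : 0 < m) (hmn : m <= n) : maxdeg (Gr m n) = m.-1.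
Proof.
apply/eqP; rewrite eqn_leq; apply/andP; split.
  by apply/bigmax_leqP => v _; apply: deg_le.
apply: (leq_trans (deg0 m_gt0 hmn)).
rewrite /maxdeg; exact: (@leq_bigmax _ (fun v => #|[set u | Gr m n v u]|)).
Qed.

Lemma bern x q : x ^ q * (x + q) <= x.+1 ^ q * x.
Proof.
elim: q => [|q IH]; first by rewrite !expn0 !mul1n addn0.
rewrite !expnS.
set y := x ^ q; set z := x.+1 ^ q.
have h1 : x * (x + q.+1) <= x.+1 * (x + q) by nia.
have h2 : y * (x * (x + q.+1)) <= y * (x.+1 * (x + q)) by rewrite leq_mul2l h1 orbT.
have h3 : x.+1 * (y * (x + q)) <= x.+1 * (z * x) by rewrite leq_mul2l IH orbT.
have e1 : x * y * (x + q.+1) = y * (x * (x + q.+1)) by ring.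
have e2 : y * (x.+1 * (x + q)) = x.+1 * (y * (x + q)) by ring.
have e3 : x.+1 * (z * x) = x.+1 * z * x by ring.
by rewrite e1 -e3; apply: (leq_trans h2); rewrite e2.
Qed.

Lemma final_nat c s M q : 0 < M -> c * M ^ q <= M.-1 ^ q * s -> c * q <= M * s.
Proof.
case: M => // x _ /= h.
have hb := bern x q.
have h1 : c * x.+1 ^ q * (x + q) <= x ^ q * s * (x + q) by rewrite leq_mul2r h orbT.
have h2 : x ^ q * s * (x + q) <= x.+1 ^ q * (x * s).
  have -> : x ^ q * s * (x + q) = s * (x ^ q * (x + q)) by ring.
  have -> : x.+1 ^ q * (x * s) = s * (x.+1 ^ q * x) by ring.
  by rewrite leq_mul2l hb orbT.
have h3 := leq_trans h1 h2.
have h4 : c * (x + q) <= x * s.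
  have e : c * x.+1 ^ q * (x + q) = x.+1 ^ q * (c * (x + q)) by ring.
  by rewrite e leq_pmul2l ?expn_gt0 in h3.
apply: (leq_trans _ (leq_trans h4 _)); first by rewrite leq_mul2l leq_addl orbT.
by rewrite leq_mul2r leqnSn orbT.
Qed.

Lemma powE a b : Nat.pow a b = expn a b.
Proof. elim: b => [|b IH] //=; by rewrite IH expnS. Qed.

Section Good.
Variables (m n k : nat).
Hypothesis m_gt0 : 0 < m.
Hypothesis hD : (maxdeg (Gr m n)).+1 = m.
Notation D := (maxdeg (Gr m n)).+1.
Definition SS := [set A : {set 'I_D} | #|A| == k].
Definition ZZ := [set A : {set 'I_D} | (#|A| == k) && (ord0 \notin A)].

Lemma good_sub : good_lists (Gr m n) k \subset [set L | goodB SS ZZ m L].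
Proof.
apply/subsetP => L; rewrite !inE => /andP [/forallP Lk /existsP [c /andP [/forallP cL /forallP cP]]].
apply/andP; split; first by apply/forallP => v; rewrite inE Lk.
apply/forallP => b.
have hb : b * m + m <= n.
  have := ltn_ord b; rewrite leq_divRL // mulSn addnC //.
pose w (i : 'I_m) : 'I_n := Ordinal (n:=n) (m:=b * m + i) ltac:(have := ltn_ord i; lia).
have wdiv i : w i %/ m = b by rewrite /= divnMDl // (divn_small (ltn_ord i)) addn0.
pose phi (i : 'I_m) := c (w i).
have phinj : injective phi.
  move=> i j E; apply/eqP; apply/negPn/negP => ij.
  have := cP (w i); move/forallP/(_ (w j)); rewrite /Gr !wdiv eqxx ltn_ord /=.
  have -> : (w i != w j) by apply/negP => /eqP /(congr1 val) /= /eqP; rewrite eqn_add2l => /eqP /val_inj /eqP; apply/negP.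
  by rewrite /phi in E; rewrite E eqxx.
have := inj_card_onto phinj ltac:(by rewrite !card_ord hD) ord0.
case/codomP => i hi.
apply/existsP; exists (w i); rewrite wdiv eqxx /= inE negb_and negbK.
by apply/orP; right; rewrite hi; apply: cL.
Qed.

Lemma SZ_sub : ZZ \subset SS.
Proof. by apply/subsetP => A; rewrite !inE => /andP []. Qed.

Lemma SZ_card (hk : 0 < k -> m = k.*2) : #|SS| <= #|ZZ|.*2.
Proof.
rewrite -addnn -(cardsID ZZ SS) (setIidPr SZ_sub) leq_add2l.
have cinj : injective (fun A : {set 'I_D} => ~: A) by apply: can_inj setCK.
rewrite -(card_imset _ cinj); apply: subset_leq_card; apply/subsetP => B /imsetP [A].
rewrite !inE => /andP [nZ /eqP Ak] ->.
have A0 : ord0 \in A by move: nZ; rewrite Ak eqxx /= negbK.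
have k0 : 0 < k by rewrite -Ak card_gt0; apply/set0Pn; exists ord0.
have hc : #|A| + #|~: A| = m by rewrite cardsC card_ord hD.
have hm := hk k0; rewrite -addnn in hm.
have -> : #|~: A| = k by lia.
by rewrite eqxx inE negbK A0.
Qed.

End Good.

Lemma lists_card m n k : #|lists n (maxdeg (Gr m n)).+1 k| = #|SS m n k| ^ n.
Proof.
have -> : #|SS m n k| ^ n = #|ffun_on_mem 'I_n (mem (SS m n k))| by rewrite card_ffun_on card_ord.
apply: eq_card => L; rewrite !inE; apply/forallP/ffun_onP => h v.
  by rewrite inE h.
by have := h v; rewrite inE.
Qed.

Lemma key m n k (hm : m = 2 * maxn k 1) (hmn : m <= n) :
  #|good_lists (Gr m n) k| * (n %/ m) <= 2 ^ m * #|lists n (maxdeg (Gr m n)).+1 k|.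
Proof.
have m_gt0 : 0 < m by rewrite hm; lia.
have hD : (maxdeg (Gr m n)).+1 = m by rewrite maxdeg_Gr // prednK.
have hk : 0 < k -> m = k.*2 by move=> k0; rewrite hm; lia.
have sz := SZ_card m_gt0 hD hk.
have ll := left_le m (SZ_sub m n k).
set s := #|SS m n k| in sz ll *; set z := #|ZZ m n k| in sz ll *.
set L := #|_| in ll.
have hb : L * 2 ^ m <= (2 ^ m).-1 * s ^ m.
  have P1 : L * 2 ^ m + z ^ m * 2 ^ m <= s ^ m * 2 ^ m by rewrite -mulnDl leq_mul2r ll orbT.
  have P2 : s ^ m <= z ^ m * 2 ^ m.
    by rewrite -expnMn leq_exp2r // mulnC mul2n.
  have M0 : 0 < 2 ^ m by rewrite expn_gt0.
  have E : s ^ m * 2 ^ m = (2 ^ m).-1 * s ^ m + s ^ m.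
    by rewrite -{3}(mul1n (s ^ m)) -mulnDl addn1 prednK // mulnC.
  lia.
have cb := cnt_bound m_gt0 hb n.
have gc : #|good_lists (Gr m n) k| <= cnt (SS m n k) (ZZ m n k) m n.
  by rewrite /cnt; apply: subset_leq_card; apply: good_sub.
rewrite lists_card; apply: final_nat; first by rewrite expn_gt0.
apply: leq_trans cb; by rewrite leq_mul2r gc orbT.
Qed.

From Stdlib Require Import Reals Lra Ring Field RIneq.
Section RealPart.
Local Open Scope R_scope.

Lemma INR_le (a b : nat) : (a <= b)%nat -> INR a <= INR b.
Proof. by move/leP; apply: le_INR. Qed.

Lemma INR_lt (a b : nat) : (a < b)%nat -> INR a < INR b.
Proof. by move/ltP; apply: lt_INR. Qed.

Lemma ln256_pos : 0 < ln (INR 256).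
Proof.
rewrite -ln_1; apply: ln_increasing; first lra.
have := INR_lt (a:=1) (b:=256) isT; rewrite /= => h; lra.
Qed.

Lemma pow256 (k n : nat) : (0 < n)%nat -> INR k * ln (INR 256) <= ln (INR n) -> (256 ^ k <= n)%nat.
Proof.
move=> n0 h; rewrite leqNgt; apply/negP => /INR_lt hl.
have p0 : 0 < INR n by apply: (INR_lt (a:=0)).
rewrite -?powE pow_INR in hl.
have := ln_increasing _ _ p0 hl.
rewrite ln_pow; last by have := INR_lt (a:=0) (b:=256) isT; rewrite /=; lra.
lra.
Qed.

Lemma asympt (K : nat -> nat)
  (hK : forall eps : R, (0 < eps)%R -> exists N : nat, forall n : nat, (N <= n)%nat ->
          (INR (K n) <= eps * (ln (INR n) / ln (ln (INR n))))%R) :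
  exists N, forall n, (N <= n)%nat -> (256 ^ (maxn (K n) 1) <= n)%nat.
Proof.
have t0 := ln256_pos.
have [N0 hN0] := hK (/ ln (INR 256)) (Rinv_0_lt_compat _ t0).
have [N1 hN1] := INR_unbounded (exp (exp 1)).
exists (maxn (maxn N0 N1) 256) => n hn.
have n256 : (256 <= n)%nat by lia.
case: (leqP (K n) 0) => hk.
  by have -> : maxn (K n) 1 = 1%nat by lia.
have -> : maxn (K n) 1 = K n by lia.
apply: pow256; first lia.
have IK := hN0 n ltac:(lia).
have nN1 : INR N1 <= INR n by apply: INR_le; lia.
have e0 : 0 < exp (exp 1) by apply: exp_pos.
have l1 : exp 1 < ln (INR n).
  rewrite -{1}(ln_exp (exp 1)); apply: ln_increasing => //; lra.
have e1 : 1 < exp 1 by have := exp_increasing 0 1 ltac:(lra); rewrite exp_0.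
have l2 : 1 < ln (ln (INR n)).
  rewrite -{1}(ln_exp 1); apply: ln_increasing => //; lra.
set X := ln (INR n) in IK l1 l2 *; set L := ln X in IK l2.
have hX : X / L <= X.
  apply: (Rmult_le_reg_r L); first lra.
  have -> : X / L * L = X by field; apply: Rgt_not_eq; lra.
  nra.
have : INR (K n) * ln (INR 256) <= / ln (INR 256) * X * ln (INR 256).
  apply: Rmult_le_compat_r; first lra.
  apply: (Rle_trans _ _ _ IK); apply: Rmult_le_compat_l => //.
  by left; apply: Rinv_0_lt_compat.
have -> : / ln (INR 256) * X * ln (INR 256) = X by field; apply: Rgt_not_eq.
done.
Qed.

Lemma real_fin (g q M Ls p : nat) (eps : R) : 0 < eps -> / eps < INR p ->
  (g * q <= M * Ls)%nat -> (p * M <= q)%nat -> (0 < M)%nat ->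
  INR g <= eps * INR Ls.
Proof.
move=> e0 hp h1 h2 M0.
have H1 : INR g * INR q <= INR M * INR Ls by rewrite -!mult_INR; apply: INR_le.
have H2 : INR p * INR M <= INR q by rewrite -!mult_INR; apply: INR_le.
have H3 : 0 < INR M by apply: (INR_lt (a:=0)).
have H4 : 1 < eps * INR p.
  have := Rmult_lt_compat_l eps _ _ e0 hp; rewrite Rinv_r //; lra.
have g0 := pos_INR g; have L0 := pos_INR Ls.
have q0 : 0 < INR q by nra.
apply: (Rmult_le_reg_r (INR q)) => //.
have H5 : INR M * INR Ls <= (eps * INR p) * (INR M * INR Ls).
  have : 0 <= INR M * INR Ls by nra.
  nra.
have H6 : (eps * INR p) * (INR M * INR Ls) <= eps * INR Ls * INR q.
  have -> : eps * INR p * (INR M * INR Ls) = (eps * INR Ls) * (INR p * INR M) by ring.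
  apply: Rmult_le_compat_l => //; nra.
lra.
Qed.

End RealPart.

Theorem mainTheorem16 (K : nat -> nat)
  (hK : forall eps : R, (0 < eps)%R -> exists N : nat, forall n : nat, (N <= n)%N ->
          (INR (K n) <= eps * (ln (INR n) / ln (ln (INR n))))%R) :
  exists G : forall n : nat, rel 'I_n,
    (forall n : nat, irreflexive (G n) /\ symmetric (G n)) /\
    exists N : nat,
      (forall n : nat, (N <= n)%N -> (K n <= (maxdeg (G n)).+1)%N) /\
      (forall eps : R, (0 < eps)%R -> exists M : nat, forall n : nat, (M <= n)%N ->
         (INR #|good_lists (G n) (K n)|
            <= eps * INR #|lists n (maxdeg (G n)).+1 (K n)|)%R).
Proof.
exists (fun n => Gr (2 * maxn (K n) 1) n); split.
  by move=> n; split; [apply: Gr_irr | apply: Gr_sym].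
have [N hN] := asympt hK.
have big n : (N <= n)%nat -> (expn 2 (2 * maxn (K n) 1) * expn 2 (2 * maxn (K n) 1) *
      (expn 2 (2 * maxn (K n) 1) * expn 2 (2 * maxn (K n) 1)) <= n)%nat.
  move=> hn; apply: (leq_trans _ (hN n hn)); try rewrite powE.
  by rewrite -!expnD -[256]/(expn 2 8) -expnM; apply: leq_pexp2l => //; lia.
have hm n : (N <= n)%nat -> (2 * maxn (K n) 1 <= n)%nat.
  move=> hn; apply: (leq_trans _ (big n hn)).
  set m := 2 * _; set a := expn 2 m.
  have h1 : (m < a)%nat by apply: ltn_expl.
  have a0 : (0 < a)%nat by rewrite expn_gt0.
  apply: (leq_trans (ltnW h1)); rewrite -mulnA leq_pmulr //.
  by rewrite !muln_gt0 a0.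
exists N; split.
  move=> n hn; rewrite maxdeg_Gr ?prednK //; try lia.
  exact: hm.
move=> eps he.
have [p hp] := INR_unbounded (/ eps).
exists (maxn N (p.+1 * p.+1)) => n hn.
have hnN : (N <= n)%nat by lia.
set m := 2 * maxn (K n) 1.
have kk := key (erefl m) (hm n hnN).
apply: (real_fin he (Rgt_lt _ _ hp) kk); last by rewrite expn_gt0.
rewrite leq_divRL; last by rewrite /m; lia.
have hb := big n hnN; rewrite -/m in hb.
set a := expn 2 m in hb *.
have ma : (m <= a)%nat by apply: ltnW; apply: ltn_expl.
have pp : (p * p <= n)%nat.
  apply: (leq_trans (leq_mul (leqnSn p) (leqnSn p))).
  exact: (leq_trans (leq_maxr N _) hn).
set b := a * a in hb.
apply: (leq_trans (n := p * b)).
  by rewrite /b mulnA leq_mul2l ma orbT.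
case: (leqP b p) => bp.
  by apply: leq_trans pp; rewrite leq_mul2l bp orbT.
by apply: leq_trans hb; rewrite leq_mul2r (ltnW bp) orbT.
Qed.
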